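(* Let $\mathrm{dist}$ be a distance measure and let $\Pi$ be an SSP-NP-complete problem such that \textsc{3Sat} is blow-up SSP reducible to $\Pi$ with respect to $\mathrm{dist}$. Then every SSP problem $\Pi'$ to which there is a blow-up preserving SSP reduction from $\Pi$ is such that \textsc{3Sat} is blow-up SSP reducible to $\Pi'$ with respect to $\mathrm{dist}$.
   Context: An SSP problem is $\Pi = (\mathcal{I}, \mathcal{U}, \mathcal{S})$ with instances $\mathcal{I} \subseteq \{0,1\}^*$, and for each $I$ a universe $\mathcal{U}(I)$ and solution set $\mathcal{S}(I) \subseteq 2^{\mathcal{U}(I)}$; $I$ is a yes-instance iff $\mathcal{S}(I)\ne\emptyset$. \textsc{Satisfiability} as SSP problem: instance = literal set $L = \{\ell_1,\dots,\ell_n,\overline{\ell}_1,\dots,\overline{\ell}_n\}$ and clauses $C_j \subseteq L$; universe $L$; solutions are the $L' \subseteq L$ with $|L'\cap\{\ell_i,\overline{\ell}_i\}|=1$ for all $i$ and $|L'\cap C_j| \ge 1$ for all $j$. \textsc{3Sat}: the same with every clause having three literals. An SSP reduction from $(\mathcal{I},\mathcal{U},\mathcal{S})$ to $(\mathcal{I}',\mathcal{U}',\mathcal{S}')$: polynomial-time $g$ with $\mathcal{S}(I)\ne\emptyset \iff \mathcal{S}'(g(I))\ne\emptyset$ and polynomial-time injective $f_I : \mathcal{U}(I)\to\mathcal{U}'(g(I))$ with $\{f_I(S): S\in\mathcal{S}(I)\} = \{S'\cap f_I(\mathcal{U}(I)) : S'\in\mathcal{S}'(g(I))\}$. A problem is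 SSP-NP-complete if its solutions are verifiable in polynomial time and there is an SSP reduction from \textsc{Satisfiability} to it. A blow-up preserving SSP reduction from $\Pi$ to $\Pi'$ is an SSP reduction $(g, f_I)$ such that for every instance $I$ and every $u' \in \mathcal{U}'(g(I))$, either $u' \in f_I(\mathcal{U}(I))$, or $u'$ lies in no solution $S' \in \mathcal{S}'(g(I))$, or $u'$ lies in every solution $S' \in \mathcal{S}'(g(I))$. A distance measure assigns to each set $U$ a polynomial-time computable $\mathrm{dist}_U : 2^U\times 2^U\to\mathbb{R}_{\ge0}$, invariant under injective maps ($\mathrm{dist}_U(A_1,A_2)=\mathrm{dist}_{U'}(f(A_1),f(A_2))$), invariant under union ($\mathrm{dist}_U(A_1,A_2)=\mathrm{dist}_U(A_1\cup\{x\},A_2\cup\{x\})$ for $x\notin A_1\cup A_2$), with $\mathrm{dist}_U(A,A)=0$. \textsc{3Sat} is blow-up SSP reducible to $\Pi'=(\mathcal{I}',\mathcal{U}',\mathcal{S}')$ with respect to $\mathrm{dist}$ if for every \textsc{3Sat} instance $I$ with literals $L$ and every $L_b\subseteq L$ with $\ell_i\in L_b\iff\overline{\ell}_i\in L_b$ there is an SSP reduction $(g,f_I)$ and a polynomial-time computable $\beta_I\in\mathbb{N}$ such that for all $S_1,S_2\in\mathcal{S}'(g(I))$: $f_I(L_b)\cap S_1 = f_I(L_b)\cap S_2 \iff \mathrm{dist}(S_1,S_2)\le\beta_I$. *)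

(* Defs.v *)
From mathcomp Require Import all_boot all_order all_algebra.
From mathcomp Require Import finmap.
Set Implicit Arguments. Unset Strict Implicit. Unset Printing Implicit Defensive.
Import Order.TTheory GRing.Theory Num.Theory.
Local Open Scope fset_scope.

Definition word := seq bool.

Definition pairw (x y : word) : word :=
  flatten [seq [:: b; b] | b <- x] ++ [:: true; false] ++ y.
Fixpoint unpairw (w : word) : word * word :=
  match w with
  | b1 :: b2 :: r => if b1 == b2 then let: (x, y) := unpairw r in (b1 :: x, y)
                     else ([::], r)
  | _ => ([::], [::])
  end.
Definition fstw (w : word) : word := (unpairw w).1.
Definition sndw (w : word) : word := (unpairw w).2.

Definition nat2word (n : nat) : word :=
  [seq odd (n %/ 2 ^ i) | i <- iota 0 (trunc_log 2 n).+1].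

Definition encfs (S : {fset word}) : word :=
  foldr pairw [::] (enum_fset S).

(** Polynomial-time computability is not available in the libraries; the
    theorem is stated for every predicate PT on word functions that has the
    closure properties enjoyed by polynomial-time computable functions. *)
Definition poly_class (PT : (word -> word) -> Prop) : Prop :=
  [/\ PT id, PT fstw, PT sndw,
      (forall f g, PT f -> PT g -> PT (f \o g)) &
      (forall f g, PT f -> PT g -> PT (fun w => pairw (f w) (g w)))].

Record SSP := {
  ssp_inst : word -> Prop;
  ssp_univ : word -> {fset word};
  ssp_sol  : word -> {fset word} -> Prop;
  ssp_sol_sub : forall I S, ssp_sol I S -> S `<=` ssp_univ I
}.

Definition fimg (f : word -> word) (A : {fset word}) : {fset word} :=
  [fset f x | x in A].

(** SSP reduction (g, f_I) from P to P'; f_I is represented as f I. *)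
Definition ssp_red (PT : (word -> word) -> Prop) (P P' : SSP)
    (g : word -> word) (f : word -> word -> word) : Prop :=
  [/\ PT g /\ PT (fun w => f (fstw w) (sndw w)),
      (forall I, ssp_inst P I -> ssp_inst P' (g I)),
      (forall I, ssp_inst P I ->
         (exists S, ssp_sol P I S) <-> (exists S', ssp_sol P' (g I) S')),
      (forall I, ssp_inst P I ->
         {in ssp_univ P I &, injective (f I)} /\
         (forall u, u \in ssp_univ P I -> f I u \in ssp_univ P' (g I))) &
      (forall I, ssp_inst P I -> forall T : {fset word},
         (exists S, ssp_sol P I S /\ T = fimg (f I) S) <->
         (exists S', ssp_sol P' (g I) S' /\
                     T = S' `&` fimg (f I) (ssp_univ P I)))].

Definition blowup_preserving_red (PT : (word -> word) -> Prop) (P P' : SSP)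
    (g : word -> word) (f : word -> word -> word) : Prop :=
  ssp_red PT P P' g f /\
  forall I, ssp_inst P I -> forall u', u' \in ssp_univ P' (g I) ->
    [\/ u' \in fimg (f I) (ssp_univ P I),
        (forall S', ssp_sol P' (g I) S' -> u' \notin S') |
        (forall S', ssp_sol P' (g I) S' -> u' \in S')].

(* a formula: number of variables n and clauses; literal (i, true) is ℓ_(i+1),
   (i, false) is its negation *)
Definition cnf := (nat * seq (seq (nat * bool)))%type.

Definition word2nat (w : word) : nat := foldr (fun (b : bool) (n : nat) => (nat_of_bool b + n.*2)%N) 0 w.
Definition dec_cnf (w : word) : option cnf := choice.unpickle (word2nat w).

Definition litw (l : nat * bool) : word := l.2 :: nseq l.1 false.

Definition lits (F : cnf) : {fset word} :=
  [fset litw (i, b) | i in [fset x | x in iota 0 F.1], b in [fset true; false]].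

Definition clause_set (C : seq (nat * bool)) : {fset word} :=
  [fset litw l | l in [fset x | x in C]].

Definition cnf_wf (F : cnf) : Prop :=
  forall C, C \in F.2 -> forall l, l \in C -> l.1 < F.1.

Definition cnf_sol (F : cnf) (S : {fset word}) : Prop :=
  [/\ S `<=` lits F,
      (forall i, i < F.1 -> #|` S `&` [fset litw (i, true); litw (i, false)]| = 1) &
      (forall C, C \in F.2 -> 1 <= #|` S `&` clause_set C|)].

Definition sat_inst (w : word) : Prop :=
  if dec_cnf w is Some F then cnf_wf F else False.
Definition three_sat_inst (w : word) : Prop :=
  if dec_cnf w is Some F then
    cnf_wf F /\ (forall C, C \in F.2 -> #|` clause_set C| = 3)
  else False.
Definition sat_univ (w : word) : {fset word} :=
  if dec_cnf w is Some F then lits F else fset0.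
Definition sat_sol (w : word) (S : {fset word}) : Prop :=
  if dec_cnf w is Some F then cnf_sol F S else False.

Lemma sat_sol_sub I S : sat_sol I S -> S `<=` sat_univ I.
Proof. by rewrite /sat_sol /sat_univ; case: (dec_cnf I) => // F []. Qed.

Definition Satisfiability : SSP := @Build_SSP sat_inst sat_univ sat_sol sat_sol_sub.
Definition ThreeSat : SSP := @Build_SSP three_sat_inst sat_univ sat_sol sat_sol_sub.

Definition ssp_verifiable (PT : (word -> word) -> Prop) (P : SSP) : Prop :=
  exists v, PT v /\ forall I S, ssp_inst P I ->
    (v (pairw I (encfs S)) = [:: true] <-> ssp_sol P I S).

Definition ssp_np_complete (PT : (word -> word) -> Prop) (P : SSP) : Prop :=
  ssp_verifiable PT P /\ exists g f, ssp_red PT Satisfiability P g f.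

(** * Distance measures: dist U A1 A2 = dist_U(A1, A2) for A1, A2 ⊆ U *)
Definition distance_measure (R : realFieldType)
    (dist : {fset word} -> {fset word} -> {fset word} -> R) : Prop :=
  [/\ (forall U A1 A2, A1 `<=` U -> A2 `<=` U -> 0 <= dist U A1 A2)%R,
      (forall U U' (f : word -> word), {in U &, injective f} ->
         (forall x, x \in U -> f x \in U') ->
         forall A1 A2, A1 `<=` U -> A2 `<=` U ->
           dist U A1 A2 = dist U' (fimg f A1) (fimg f A2)),
      (forall U A1 A2 x, A1 `<=` U -> A2 `<=` U -> x \in U ->
         x \notin A1 `|` A2 -> dist U A1 A2 = dist U (x |` A1) (x |` A2)) &
      (forall U A, A `<=` U -> dist U A A = 0%R)].

Definition negation_closed (Lb : {fset word}) : Prop :=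
  forall i b, litw (i, b) \in Lb <-> litw (i, ~~ b) \in Lb.

Definition blowup_reducible (PT : (word -> word) -> Prop) (R : realFieldType)
    (dist : {fset word} -> {fset word} -> {fset word} -> R) (P : SSP) : Prop :=
  forall I, ssp_inst ThreeSat I ->
  forall Lb, Lb `<=` ssp_univ ThreeSat I -> negation_closed Lb ->
  exists g f, ssp_red PT ThreeSat P g f /\
  exists beta : word -> nat, PT (fun w => nat2word (beta w)) /\
    forall S1 S2, ssp_sol P (g I) S1 -> ssp_sol P (g I) S2 ->
      (fimg (f I) Lb `&` S1 = fimg (f I) Lb `&` S2 <->
       (dist (ssp_univ P (g I)) S1 S2 <= (beta I)%:R)%R).

(* Main.v *)
Require Import Defs.
From mathcomp Require Import all_boot all_order all_algebra.
From mathcomp Require Import finmap.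
From Stdlib Require Import FunctionalExtensionality.
Set Implicit Arguments. Unset Strict Implicit. Unset Printing Implicit Defensive.
Local Open Scope fset_scope.

Lemma unpair_pair x y : unpairw (pairw x y) = (x, y).
Proof.
elim: x => [|b x IH] //=. rewrite /pairw /= in IH *. by rewrite eqxx IH.
Qed.

Lemma fstw_pairw x y : fstw (pairw x y) = x.
Proof. by rewrite /fstw unpair_pair. Qed.
Lemma sndw_pairw x y : sndw (pairw x y) = y.
Proof. by rewrite /sndw unpair_pair. Qed.

Lemma fimg_inj_eq f (U A B : {fset word}) : {in U &, injective f} ->
  A `<=` U -> B `<=` U -> fimg f A = fimg f B -> A = B.
Proof.
move=> inj /fsubsetP AU /fsubsetP BU E; apply/fsetP => x; apply/idP/idP => xA.
- have : f x \in fimg f B by rewrite -E /fimg in_imfset.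
  case/imfsetP => y /= yB fxy. by rewrite (inj x y (AU _ xA) (BU _ yB) fxy).
- have : f x \in fimg f A by rewrite E /fimg in_imfset.
  case/imfsetP => y /= yB fxy. by rewrite (inj x y (BU _ xA) (AU _ yB) fxy).
Qed.

Lemma fimgI' f (U A B : {fset word}) : {in U &, injective f} ->
  A `<=` U -> B `<=` U -> fimg f (A `&` B) = fimg f A `&` fimg f B.
Proof.
move=> inj /fsubsetP AU /fsubsetP BU; rewrite /fimg imfsetI //.
by move=> x y xA yB; apply: inj; [apply: AU|apply: BU].
Qed.

Lemma fimg_sub f (A B : {fset word}) : A `<=` B -> fimg f A `<=` fimg f B.
Proof.
move=> /fsubsetP AB; apply/fsubsetP => y /imfsetP [x /= xA ->].
by rewrite /fimg in_imfset //= AB.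
Qed.

Lemma fimg_into f (U U' A : {fset word}) : (forall x, x \in U -> f x \in U') ->
  A `<=` U -> fimg f A `<=` U'.
Proof.
move=> H /fsubsetP AU; apply/fsubsetP => y /imfsetP [x /= xA ->].
by apply: H; apply: AU.
Qed.

Lemma dist_addC (R : realFieldType) dist U (A1 A2 : {fset word}) C :
  @distance_measure R dist -> A1 `<=` U -> A2 `<=` U -> C `<=` U ->
  (forall x, x \in C -> x \notin A1 `|` A2) ->
  dist U A1 A2 = dist U (C `|` A1) (C `|` A2).
Proof.
move=> [_ _ Hu _] H1 H2; elim/fset1U_rect: C.
  by rewrite !fset0U.
move=> x X xX IH sub disj.
have sX : X `<=` U.
  apply/fsubsetP => y yX; apply: (fsubsetP sub); by rewrite !inE yX orbT.
rewrite IH //; last by move=> y yX; apply: disj; rewrite !inE yX orbT.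
rewrite -!fsetUA; apply: Hu.
- by rewrite fsubUset sX H1.
- by rewrite fsubUset sX H2.
- by apply: (fsubsetP sub); rewrite !inE eqxx.
- have := disj x; rewrite !inE eqxx /= => /(_ isT).
  by rewrite (negbTE xX) /=.
Qed.

Lemma split_set (S B : {fset word}) : S = (S `\` B) `|` (S `&` B).
Proof.
apply/fsetP => x; rewrite !inE; by case: (x \in S); case: (x \in B).
Qed.

Lemma compose_red PT P Q P' g f g' f' :
  poly_class PT -> ssp_red PT P Q g f -> ssp_red PT Q P' g' f' ->
  ssp_red PT P P' (g' \o g) (fun I u => f' (g I) (f I u)).
Proof.
move=> [Pid Pfst Psnd Pcomp Ppair].
move=> [[PTg PTf] inst sol injm corr] [[PTg' PTf'] inst' sol' injm' corr'].
split.
- split; first exact: (Pcomp).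
  have -> : (fun w => f' (g (fstw w)) (f (fstw w) (sndw w))) =
     (fun w => f' (fstw w) (sndw w)) \o
     (fun w => pairw ((g \o fstw) w) (f (fstw w) (sndw w))).
    by apply: functional_extensionality => w /=; rewrite fstw_pairw sndw_pairw.
  apply: (Pcomp) => //; apply: (Ppair) => //; exact: (Pcomp).
- by move=> I HI /=; apply: inst'; apply: inst.
- move=> I HI /=; rewrite (sol I HI); exact: sol' (inst I HI).
- move=> I HI /=; have [i1 m1] := injm I HI; have [i2 m2] := injm' _ (inst I HI).
  split; last by move=> u uU; apply: m2; apply: m1.
  move=> x y xU yU /= E; apply: i1 => //; apply: i2 => //; exact: m1.
- move=> I HI T /=.
  have [i1 m1] := injm I HI; have [i2 m2] := injm' _ (inst I HI).
  have HQ := inst I HI.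
  have key : forall S'', ssp_sol Q (g I) S'' ->
     fimg (f' (g I)) (S'' `&` fimg (f I) (ssp_univ P I)) =
     fimg (f' (g I)) S'' `&` fimg (f' (g I)) (fimg (f I) (ssp_univ P I)).
    move=> S'' HS; apply: fimgI' i2 _ _; first exact: ssp_sol_sub HS.
    exact: fimg_into m1 (fsubset_refl _).
  have compE : forall A, fimg (fun u => f' (g I) (f I u)) A =
                        fimg (f' (g I)) (fimg (f I) A).
    by move=> A; rewrite /fimg -imfset_comp.
  have subU : fimg (f' (g I)) (fimg (f I) (ssp_univ P I)) `<=`
              fimg (f' (g I)) (ssp_univ Q (g I)).
    by apply: fimg_sub; apply: fimg_into m1 (fsubset_refl _).
  split.
  + move=> [S [HS ->]].
    have [fw _] := corr I HI (fimg (f I) S).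
    have [S'' [HS'' E1]] := fw (ex_intro _ S (conj HS erefl)).
    have [fw' _] := corr' _ HQ (fimg (f' (g I)) S'').
    have [S' [HS' E2]] := fw' (ex_intro _ S'' (conj HS'' erefl)).
    exists S'; split => //.
    rewrite compE E1 key // E2 compE -fsetIA; congr (_ `&` _).
    by apply/fsetIidPr.
  + move=> [S' [HS' ->]].
    have [_ bw'] := corr' _ HQ (S' `&` fimg (f' (g I)) (ssp_univ Q (g I))).
    have [S'' [HS'' E2]] := bw' (ex_intro _ S' (conj HS' erefl)).
    have [_ bw] := corr I HI (S'' `&` fimg (f I) (ssp_univ P I)).
    have [S [HS E1]] := bw (ex_intro _ S'' (conj HS'' erefl)).
    exists S; split => //.
    rewrite !compE -E1 key // -E2 -fsetIA; congr (_ `&` _).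
    by apply/esym/fsetIidPr.
Qed.

Theorem theorem4 (PT : (word -> word) -> Prop) (R : realFieldType)
    (dist : {fset word} -> {fset word} -> {fset word} -> R) (P : SSP) :
  poly_class PT ->
  distance_measure dist ->
  ssp_np_complete PT P ->
  blowup_reducible PT dist P ->
  forall P' : SSP,
    (exists g f, blowup_preserving_red PT P P' g f) ->
    blowup_reducible PT dist P'.
Proof.
move=> Hpc Hdm _ Hbr P' [g' [f' [red' bp]]] I HI Lb LbU Lbneg.
have [g [f [red [beta [PTb Hb]]]]] := Hbr I HI Lb LbU Lbneg.
exists (g' \o g), (fun I u => f' (g I) (f I u)); split.
  exact: compose_red Hpc red red'.
exists beta; split => // S1' S2' H1 H2.
have [_ inst _ injm corr] := red.
have [_ _ _ injm' corr'] := red'.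
have HQ := inst I HI.
have [i1 m1] := injm I HI; have [i2 m2] := injm' _ HQ.
set UQ := ssp_univ P (g I).
set B := fimg (f' (g I)) UQ.
have getS : forall S', ssp_sol P' (g' (g I)) S' ->
    exists S, ssp_sol P (g I) S /\ fimg (f' (g I)) S = S' `&` B.
  move=> S' HS'.
  have [_ bw] := corr' _ HQ (S' `&` B).
  have [S [HS E]] := bw (ex_intro _ S' (conj HS' erefl)).
  by exists S; split => //; rewrite E.
have [S1 [HS1 E1]] := getS S1' H1.
have [S2 [HS2 E2]] := getS S2' H2.
have S1U := ssp_sol_sub HS1; have S2U := ssp_sol_sub HS2.
have LU : fimg (f I) Lb `<=` UQ by apply: fimg_into m1 _.
have CE : S1' `\` B = S2' `\` B.
  apply/fsetP => x; rewrite !inE.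
  case xB: (x \in B) => //=.
  case x1: (x \in S1'); case x2: (x \in S2') => //.
  - have xU : x \in ssp_univ P' (g' (g I)) by apply: (fsubsetP (ssp_sol_sub H1)).
    case: (bp _ HQ x xU) => [|/(_ _ H1)|/(_ _ H2)].
    + by rewrite -/UQ -/B xB.
    + by rewrite x1.
    + by rewrite x2.
  - have xU : x \in ssp_univ P' (g' (g I)) by apply: (fsubsetP (ssp_sol_sub H2)).
    case: (bp _ HQ x xU) => [|/(_ _ H2)|/(_ _ H1)].
    + by rewrite -/UQ -/B xB.
    + by rewrite x2.
    + by rewrite x1.
have distE : dist (ssp_univ P' (g' (g I))) S1' S2' = dist UQ S1 S2.
  have [_ Hinj _ _] := Hdm.
  rewrite (Hinj UQ (ssp_univ P' (g' (g I))) (f' (g I)) i2 m2 _ _ S1U S2U).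
  rewrite [S1' in LHS](split_set S1' B) [S2' in LHS](split_set S2' B) -CE -E1 -E2.
  symmetry; apply: dist_addC => //.
  - exact: fimg_into m2 S1U.
  - exact: fimg_into m2 S2U.
  - apply/fsubsetP => x; rewrite inE => /andP [_ xs]; exact: (fsubsetP (ssp_sol_sub H1)).
  - move=> x; rewrite !inE => /andP [xB _]; apply/negP => /orP [] xin.
    + by move: xB; rewrite (fsubsetP (fimg_sub (f' (g I)) S1U) x xin).
    + by move: xB; rewrite (fsubsetP (fimg_sub (f' (g I)) S2U) x xin).
rewrite distE -Hb //.
have LE : forall S' S, fimg (f' (g I)) S = S' `&` B -> S `<=` UQ ->
    fimg (fun u => f' (g I) (f I u)) Lb `&` S' =
    fimg (f' (g I)) (fimg (f I) Lb `&` S).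
  move=> S' S E SU.
  have -> : fimg (fun u => f' (g I) (f I u)) Lb = fimg (f' (g I)) (fimg (f I) Lb).
    by rewrite /fimg -imfset_comp.
  rewrite (fimgI' i2 LU SU) E fsetIA.
  by apply/esym/fsetIidPl; apply: fsubset_trans (fsubsetIl _ _) (fimg_sub _ LU).
rewrite (LE _ _ E1 S1U) (LE _ _ E2 S2U).
split => [E|->//].
apply: fimg_inj_eq i2 _ _ E.
- exact: fsubset_trans (fsubsetIl _ _) LU.
- exact: fsubset_trans (fsubsetIl _ _) LU.
Qed.
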